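(* Let $\Gamma$ be a Taylor graph with vertex set $X$, let $x\in X$, and let $W$ be an irreducible $T(x)$-module. Then the endpoint of $W$ is either $0$ or $1$.
   Context: A Taylor graph is a distance-regular graph with intersection array $\{k,b,1;1,b,k\}$ where $b<k-1$; it has diameter $3$. Let $A$ be its adjacency matrix, $\partial$ its distance, $V=\mathbb{C}^X$, and for $0\le i\le 3$ let $E^*_i(x)$ be the diagonal matrix with $(E^*_i(x))_{yy}=1$ if $\partial(x,y)=i$ and $0$ otherwise. The Terwilliger algebra $T(x)$ is the subalgebra of $\mathrm{Mat}_X(\mathbb{C})$ generated by $A,E^*_0(x),\dots,E^*_3(x)$. A $T(x)$-module is a subspace $W\subseteq V$ with $BW\subseteq W$ for all $B\in T(x)$; it is irreducible if nonzero with no submodules other than $0,W$. The endpoint of an irreducible $T(x)$-module $W$ is $\min\{i: E^*_i(x)W\neq 0\}$. *)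

(* Defs.v *)
From mathcomp Require Import all_boot all_order all_algebra all_field.
Set Implicit Arguments. Unset Strict Implicit. Unset Printing Implicit Defensive.
Import GRing.Theory Num.Theory.
Local Open Scope ring_scope.

Section Graph.
Variables (X : finType) (e : rel X).

Fixpoint ball (n : nat) (x : X) : {set X} :=
  match n with
  | 0 => [set x]
  | n'.+1 => ball n' x :|: [set z | [exists y in ball n' x, e y z]]
  end.

(* graph distance: least n with y in ball n x (for a connected graph, this is
   attained below #|X|). *)
Definition dist (x y : X) : nat := find (fun n => y \in ball n x) (iota 0 #|X|).

Definition bcount (x y : X) : nat :=
  #|[set z | e y z & dist x z == (dist x y).+1]|.
Definition ccount (x y : X) : nat :=
  #|[set z | e y z & dist x z == (dist x y).-1]|.

(* Distance-regular graph with intersection array {k, b, 1; 1, b, k}, b < k-1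
   (a Taylor graph); the diameter is 3. *)
Definition taylor_graph (k b : nat) : Prop :=
  [/\ symmetric e, irreflexive e, (forall x y, connect e x y),
      (forall x y, dist x y <= 3)%N
    & [/\ (forall x y, (dist x y <= 2)%N -> bcount x y = nth 0%N [:: k; b; 1%N] (dist x y)),
           (forall x y, (1 <= dist x y)%N -> ccount x y = nth 0%N [:: 0%N; 1%N; b; k] (dist x y))
         & (b < k - 1)%N]].

Local Notation n := #|X|.

Definition adjmx : 'M[algC]_n :=
  \matrix_(i, j) (e (enum_val i) (enum_val j))%:R.

Definition Estar (x : X) (i : nat) : 'M[algC]_n :=
  \matrix_(a, b) ((a == b) && (dist x (enum_val a) == i))%:R.

(* T(x): the subalgebra of Mat_X(C) generated by A, E*_0(x), ..., E*_3(x):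
   the matrices lying in every subalgebra containing these generators. *)
Definition subalgebra (S : pred 'M[algC]_n) : Prop :=
  [/\ 0 \in S, 1%:M \in S,
      (forall M N, M \in S -> N \in S -> M + N \in S),
      (forall (c : algC) M, M \in S -> c *: M \in S)
    & (forall M N, M \in S -> N \in S -> M *m N \in S)].

Definition in_Terwilliger (x : X) (B : 'M[algC]_n) : Prop :=
  forall S : pred 'M[algC]_n, subalgebra S ->
    adjmx \in S -> (forall i, (i <= 3)%N -> Estar x i \in S) -> B \in S.

(* Subspaces of V = C^X are represented (mxalgebra style) by the row space of a
   matrix W; the row vector w^T corresponds to the column vector w, so B W is
   the row space of W *m B^T. *)
Definition Tmodule (x : X) (W : 'M[algC]_n) : Prop :=
  forall B, in_Terwilliger x B -> (W *m B^T <= W)%MS.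

Definition irr_Tmodule (x : X) (W : 'M[algC]_n) : Prop :=
  [/\ Tmodule x W, W != 0 &
      forall U : 'M[algC]_n, (U <= W)%MS -> Tmodule x U -> U == 0 \/ (U == W)%MS].

Definition is_endpoint (x : X) (W : 'M[algC]_n) (i : nat) : Prop :=
  W *m (Estar x i)^T != 0 /\ (forall j, (j < i)%N -> W *m (Estar x j)^T == 0).

End Graph.

(* Main.v *)
Require Import Defs.
From mathcomp Require Import all_boot all_order all_algebra all_field zify ring.
Set Implicit Arguments. Unset Strict Implicit. Unset Printing Implicit Defensive.

Section DistLemmas.
Variables (X : finType) (e : rel X).
Hypothesis esym : symmetric e.
Hypothesis eirr : irreflexive e.
Hypothesis econ : forall x y, connect e x y.

Lemma ballS m x : ball e m.+1 x = ball e m x :|: [set z | [exists y in ball e m x, e y z]].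
Proof. by []. Qed.

Lemma ball_mono m p x : (m <= p)%N -> ball e m x \subset ball e p x.
Proof.
move=> /subnK <-; elim: (p - m)%N => [|q IH] //.
rewrite addSn; apply: subset_trans IH _; exact: subsetUl.
Qed.

Lemma ball_step m x y z : y \in ball e m x -> e y z -> z \in ball e m.+1 x.
Proof. by move=> Hy Hz; rewrite ballS !inE; apply/orP; right; apply/existsP; exists y; rewrite Hy. Qed.

Lemma ball_first m y z : e y z -> ball e m z \subset ball e m.+1 y.
Proof.
move=> eyz; elim: m => [|m IH].
  by apply/subsetP=> w; rewrite inE => /eqP->; apply: (ball_step (y:=y)); rewrite // inE.
apply/subsetP => w; rewrite ballS inE => /orP[H|].
  by apply: (subsetP (ball_mono _ (leqnSn _))); apply: (subsetP IH).
rewrite inE => /existsP[v /andP[Hv evw]].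
by apply: (ball_step (y:=v)) => //; apply: (subsetP IH).
Qed.

Lemma ball_sym m x y : (y \in ball e m x) = (x \in ball e m y).
Proof.
suff H : forall j x y, y \in ball e j x -> x \in ball e j y.
  by apply/idP/idP; apply: H.
elim=> [|j IH] x0 y0.
  by rewrite /= !inE => /eqP->.
rewrite ballS inE => /orP[H|].
  by apply: (subsetP (ball_mono _ (leqnSn _))); apply: IH.
rewrite inE => /existsP[v /andP[Hv evy]].
apply: (subsetP (ball_first j (y:=y0) (z:=v) _)); first by rewrite esym.
by apply: IH.
Qed.

Lemma ball_conn x y : exists m, y \in ball e m x.
Proof.
have /connectP[p pth ->] := econ x y.
elim: p x pth => [|z p IH] x0 /=; first by exists 0%N; rewrite inE.
case/andP=> exz pth; have [m Hm] := IH _ pth.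
exists m.+1.
exact: (subsetP (ball_first m (y:=x0) (z:=z) exz)).
Qed.

Lemma ball_stab x j : ball e j.+1 x = ball e j x -> forall q, ball e (q + j) x = ball e j x.
Proof.
move=> H; elim=> [|q IH] //.
by rewrite addSn ballS IH -ballS H.
Qed.

Lemma ball_grow x j : (j < #|ball e j x|)%N \/ (forall p, ball e p x \subset ball e j x).
Proof.
elim: j => [|j IH]; first by left; rewrite /= cards1.
case: IH => [lt|st]; last first.
  by right=> p; apply: subset_trans (st p) (ball_mono _ (leqnSn _)).
have sub := ball_mono x (leqnSn j).
have [eq|neq] := eqVneq (ball e j.+1 x) (ball e j x).
  right=> p; case: (leqP p j.+1) => hp; first exact: ball_mono.
  have hj : (j <= p)%N by apply: ltnW; apply: ltnW.
  rewrite -(subnK hj) (ball_stab eq); exact: ball_mono.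
left; apply: (leq_ltn_trans lt); apply: proper_card.
by rewrite properEneq eq_sym neq sub.
Qed.

Lemma ball_full x y : y \in ball e #|X|.-1 x.
Proof.
case: (ball_grow x #|X|.-1) => [lt|st].
  have : ball e #|X|.-1 x = setT.
    apply/eqP; rewrite eqEcard subsetT cardsT.
    by move: lt; case: #|X|.
  by move=> ->; rewrite inE.
by have [m Hm] := ball_conn x y; apply: (subsetP (st m)).
Qed.

Lemma dist_lt x y : (dist e x y < #|X|)%N /\ y \in ball e (dist e x y) x.
Proof.
have n0 : (0 < #|X|)%N by apply/card_gt0P; exists x.
have hP : has (fun n => y \in ball e n x) (iota 0 #|X|).
  apply/hasP; exists #|X|.-1; last exact: ball_full.
  by rewrite mem_iota add0n prednK // leqnn andbT.
split; first by rewrite /dist -[X in (_ < X)%N](size_iota 0) -has_find.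
have := nth_find 0%N hP; rewrite -/(dist e x y) nth_iota ?add0n //.
by rewrite /dist -[X in (_ < X)%N](size_iota 0) -has_find.
Qed.

Lemma dist_ball x y m : (dist e x y <= m)%N = (y \in ball e m x).
Proof.
have [lt inb] := dist_lt x y.
apply/idP/idP => [H|H]; first exact: (subsetP (ball_mono x H)).
case: (leqP #|X| m) => hm; first by apply: ltnW; apply: leq_trans lt hm.
rewrite leqNgt; apply/negP => hd.
have := before_find 0%N hd; rewrite nth_iota ?add0n // H //.
Qed.

Lemma dist0 x y : (dist e x y == 0%N) = (y == x).
Proof. by rewrite -leqn0 dist_ball /= inE. Qed.

Lemma distxx x : dist e x x = 0%N.
Proof. by apply/eqP; rewrite dist0. Qed.

Lemma dist_sym x y : dist e x y = dist e y x.
Proof.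
apply/eqP; rewrite eqn_leq !dist_ball -ball_sym -dist_ball leqnn /=.
by rewrite ball_sym -dist_ball.
Qed.

Lemma dist_tri x y z : e y z -> (dist e x z <= (dist e x y).+1)%N.
Proof.
move=> eyz; rewrite dist_ball; apply: (ball_step (y:=y)) => //.
by rewrite -dist_ball.
Qed.

Lemma dist_tri' x y z : e y z -> (dist e x y <= (dist e x z).+1)%N.
Proof. by move=> eyz; apply: dist_tri; rewrite esym. Qed.

Lemma dist_pred x y m : dist e x y = m.+1 -> exists z, e z y /\ dist e x z = m.
Proof.
move=> H.
have : y \in ball e m.+1 x by rewrite -dist_ball H.
rewrite ballS inE => /orP[|].
  by rewrite -dist_ball H ltnn.
rewrite inE => /existsP[z /andP[Hz ezy]]; exists z; split => //.
move: Hz; rewrite -dist_ball => Hz.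
have := dist_tri x ezy; rewrite H ltnS => Hz2.
by apply/eqP; rewrite eqn_leq Hz Hz2.
Qed.

Lemma dist1 x y : (dist e x y == 1%N) = e x y.
Proof.
apply/eqP/idP => [H|exy].
  have [z [ezy]] := dist_pred H.
  by move/eqP; rewrite dist0 => /eqP zx; rewrite -zx.
apply/eqP; rewrite eqn_leq; have := dist_tri x exy; rewrite distxx => -> /=.
rewrite lt0n dist0; apply/eqP => yx; move: exy; by rewrite yx eirr.
Qed.
End DistLemmas.

Section Taylor.
Variables (X : finType) (e : rel X) (k b : nat).
Hypothesis esym : symmetric e.
Hypothesis eirr : irreflexive e.
Hypothesis econ : forall x y, connect e x y.
Hypothesis dle3 : forall x y, (dist e x y <= 3)%N.
Hypothesis hb : forall x y, (dist e x y <= 2)%N -> bcount e x y = nth 0%N [:: k; b; 1%N] (dist e x y).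
Hypothesis hc : forall x y, (1 <= dist e x y)%N -> ccount e x y = nth 0%N [:: 0%N; 1%N; b; k] (dist e x y).
Hypothesis hbk : (b < k - 1)%N.

Local Notation d := (dist e).

Lemma cardP (P : pred X) : #|[set z | P z]| = (\sum_z (P z : nat))%N.
Proof.
rewrite -sum1_card big_mkcond; apply: eq_bigr => z _; rewrite inE; by case: (P z).
Qed.

Lemma deg v : #|[set z | e v z]| = k.
Proof.
have := @hb v v; rewrite (distxx econ) //= => <- //.
apply: eq_card => z; rewrite !inE (distxx econ) /=. 
by rewrite (dist1 eirr econ) andbb.
Qed.

Lemma cn2 u y : d u y = 2%N -> #|[set z | e y z & e z u]| = b.
Proof.
move=> H; have := @hc u y; rewrite H /= => <- //.
by rewrite /ccount H /=; apply: eq_card => z; rewrite !inE (dist1 eirr econ) (esym z u).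
Qed.

Lemma cn3 u y : d u y = 3%N -> #|[set z | e y z & e z u]| = 0%N.
Proof.
move=> H; apply: eq_card0 => z; rewrite !inE; apply/negP => /andP[eyz ezu].
have := dist_tri' esym econ u eyz; rewrite H.
have : d u z = 1%N by apply/eqP; rewrite (dist1 eirr econ) // esym.
by move=> ->.
Qed.

Lemma cn1 u y : d u y = 1%N -> #|[set z | e y z & e z u]| = (k - 1 - b)%N.
Proof.
move=> H.
have h0 := @hc u y; rewrite H /= in h0; have {}h0 := h0 isT.
have h2 := @hb u y; rewrite H /= in h2; have {}h2 := h2 isT.
move: h0 h2; rewrite /ccount /bcount H /= !cardP => h0 h2.
have := deg y; rewrite cardP.
rewrite (eq_bigr (fun z => (e y z && (d u z == 0%N)) + (e y z && (e z u)) + (e y z && (d u z == 2%N))))%N.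
  rewrite !big_split /= h0 h2 => <-. 
  set S := (\sum_z _)%N; lia.
move=> z _; case eyz: (e y z) => //=.
have := dist_tri econ u eyz; rewrite H => hz.
rewrite esym -(dist1 eirr econ) //.
by case: (d u z) hz => [|[|[|]]].
Qed.

Lemma card_G1 u : #|[set z | d u z == 1%N]| = k.
Proof.
by rewrite -(deg u); apply: eq_card => z; rewrite !inE (dist1 eirr econ).
Qed.

Lemma kpos : (1 < k)%N.
Proof. by move: hbk; case: k => [|[|]]. Qed.

Lemma card_G2 u : (0 < b)%N -> #|[set z | d u z == 2%N]| = k.
Proof.
move=> bpos.
pose F a c := ((d u a == 1%N) && (d u c == 2%N) && e a c : nat).
have L : (\sum_a \sum_c F a c = k * b)%N.
  rewrite (eq_bigr (fun a => (d u a == 1%N) * b)%N).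
    by rewrite -big_distrl /= -cardP card_G1.
  move=> a _; have [Ha|Ha] := eqVneq (d u a) 1%N; last first.
    by rewrite big1 // => c _; rewrite /F (negbTE Ha).
  rewrite ?eqxx mul1n; have := @hb u a; rewrite Ha /= => <- //.
  rewrite /bcount Ha cardP; apply: eq_bigr => c _; by rewrite /F Ha eqxx /= andbC.
have R : (\sum_a \sum_c F a c = #|[set z | d u z == 2%N]| * b)%N.
  rewrite exchange_big /= (eq_bigr (fun c => (d u c == 2%N) * b)%N).
    by rewrite -big_distrl /= -cardP.
  move=> c _; have [Hc|Hc] := eqVneq (d u c) 2%N; last first.
    by rewrite big1 // => a _; rewrite /F (negbTE Hc) andbF.
  rewrite ?Hc ?eqxx mul1n; have := @hc u c; rewrite Hc /= => <- //.
  rewrite /ccount Hc cardP; apply: eq_bigr => a _.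
  by rewrite /F Hc eqxx andbT andbC (esym c a).
by apply/eqP; rewrite -(eqn_pmul2r bpos) -R L.
Qed.

Lemma nbr3 u p : (0 < b)%N -> d u p = 3%N -> [set z | e p z & d u z == 2%N] = [set z | d u z == 2%N].
Proof.
move=> bpos H; apply/eqP; rewrite eqEcard; apply/andP; split.
  by apply/subsetP => z; rewrite !inE => /andP[_ ->].
rewrite card_G2 //; have := @hc u p; rewrite H /= => <- //.
by rewrite /ccount H.
Qed.

Lemma anti_uniq u p q : (0 < b)%N -> d u p = 3%N -> d u q = 3%N -> p = q.
Proof.
move=> bpos Hp Hq.
have : (0 < #|[set z | d u z == 2%N]|)%N by rewrite card_G2 // ltnW // kpos.
case/card_gt0P => c Hc.
have epc : e p c by move: Hc; rewrite -(nbr3 bpos Hp) inE => /andP[].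
have eqc : e q c by move: Hc; rewrite -(nbr3 bpos Hq) inE => /andP[].
have Hc2 : d u c = 2%N by move: Hc; rewrite inE => /eqP.
have := @hb u c; rewrite Hc2 /= => /(_ isT); rewrite /bcount Hc2 /=.
move=> /eqP; rewrite eqn_leq => /andP[/card_le1_eqP H _].
have Pp : p \in [set z | e c z & d u z == 3%N] by rewrite inE esym epc Hp.
have Pq : q \in [set z | e c z & d u z == 3%N] by rewrite inE esym eqc Hq.
by rewrite (H p q Pp Pq).
Qed.

Lemma antipode x z : d x z = 2%N -> exists u, d x u = 1%N /\ d u z = 3%N.
Proof.
move=> H; have H' : d z x = 2%N by rewrite (dist_sym esym econ).
have := @hb z x; rewrite H' /= => /(_ isT); rewrite /bcount H' /= => C.
have : (0 < #|[set w | e x w & d z w == 3%N]|)%N by rewrite C.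
case/card_gt0P => u; rewrite inE => /andP[exu /eqP zu].
exists u; split; first by apply/eqP; rewrite (dist1 eirr econ).
by rewrite (dist_sym esym econ).
Qed.

Lemma b0_small x y : b = 0%N -> (d x y <= 1)%N.
Proof.
move=> b0.
have no2 : forall y, d x y != 2%N.
  move=> y'; apply/eqP => H.
  have [z [ezy dz]] := dist_pred econ H.
  have := @hc x y'; rewrite H /= b0 => /(_ isT); rewrite /ccount H /= => C.
  have : z \in [set w | e y' w & d x w == 1%N] by rewrite inE esym ezy dz.
  move=> Hz; have : (0 < #|[set w | e y' w & d x w == 1%N]|)%N by apply/card_gt0P; exists z.
  by rewrite C.
have := dle3 x y; have := no2 y.
case Hd: (d x y) => [|[|[|[|]]]] //= _ _.
have [z [ezy dz]] := dist_pred econ Hd.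
by have := no2 z; rewrite dz.
Qed.
End Taylor.
Import GRing.Theory.
Local Open Scope ring_scope.

Section Key.
Variables (X : finType) (e : rel X) (k b : nat).
Hypothesis esym : symmetric e.
Hypothesis eirr : irreflexive e.
Hypothesis econ : forall x y, connect e x y.
Hypothesis dle3 : forall x y, (dist e x y <= 3)%N.
Hypothesis hb : forall x y, (dist e x y <= 2)%N -> bcount e x y = nth 0%N [:: k; b; 1%N] (dist e x y).
Hypothesis hc : forall x y, (1 <= dist e x y)%N -> ccount e x y = nth 0%N [:: 0%N; 1%N; b; k] (dist e x y).
Hypothesis hbk : (b < k - 1)%N.

Local Notation d := (dist e).
Local Notation cn y u := #|[set z | e y z & e z u]|.

Lemma nat_ident x u y : d x u = 1%N -> d x y = 2%N ->
  (b * (d u y == 3%N) + cn y u + b * e y u = b + (k - 1 - b) * e y u)%N.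
Proof.
move=> Hu Hy.
have ne0 : d u y != 0%N.
  rewrite (dist0 econ); apply/eqP => yu; by move: Hu; rewrite -yu Hy.
have := dle3 u y.
case Hd: (d u y) ne0 => [|[|[|[|]]]] //= _ _.
- have -> : e y u by rewrite esym -(dist1 eirr econ) Hd.
  rewrite (cn1 esym eirr econ hb hc hbk Hd) /=; lia.
- have -> : e y u = false by rewrite esym -(dist1 eirr econ) Hd.
  rewrite (cn2 esym eirr econ hc Hd) /=; lia.
- have -> : e y u = false by rewrite esym -(dist1 eirr econ) Hd.
  rewrite (cn3 esym eirr econ Hd) /=; lia.
Qed.

Lemma key (f : X -> algC) x :
  (forall y, d x y != 2%N -> f y = 0) ->
  (forall u, d x u = 1%N -> \sum_y f y * (e y u)%:R = 0) ->
  (forall u, (d x u <= 1)%N -> \sum_y f y * (cn y u)%:R = 0) ->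
  forall z, f z = 0.
Proof.
move=> f0 hg hh z.
have [b0|bpos] := posnP b.
  apply: f0; have := b0_small esym econ dle3 hc x z b0.
  by case: (d x z) => [|[|]].
have bne0 : (b%:R : algC) != 0 by rewrite Num.Theory.pnatr_eq0 -lt0n.
have sf : \sum_y f y = 0.
  have := hh x; rewrite (distxx econ) => /(_ isT).
  rewrite (eq_bigr (fun y => b%:R * f y)).
    by rewrite -mulr_sumr => /eqP; rewrite mulf_eq0 (negbTE bne0) => /eqP.
  move=> y _; have [H2|H2] := eqVneq (d x y) 2%N; last by rewrite f0 // mul0r mulr0.
  by rewrite (cn2 esym eirr econ hc H2) mulrC.
have S3 : forall u, d x u = 1%N -> \sum_y f y * (d u y == 3%N)%:R = 0.
  move=> u Hu.
  have : b%:R * \sum_y f y * (d u y == 3%N)%:R =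
    \sum_y (b%:R * f y + (k - 1 - b)%:R * (f y * (e y u)%:R) - f y * (cn y u)%:R
            - b%:R * (f y * (e y u)%:R)).
    rewrite mulr_sumr; apply: eq_bigr => y _.
    have [H2|H2] := eqVneq (d x y) 2%N; last by rewrite f0 // !(mul0r, mulr0, subr0, addr0).
    have N := nat_ident Hu H2.
    have NC : (b%:R * (d u y == 3%N)%:R + (cn y u)%:R + b%:R * (e y u)%:R
               = b%:R + (k - 1 - b)%:R * (e y u)%:R :> algC).
      by rewrite -!natrM -!natrD N.
    apply/eqP; rewrite -subr_eq0.
    have -> : b%:R * (f y * (d u y == 3%N)%:R) -
      (b%:R * f y + (k - 1 - b)%:R * (f y * (e y u)%:R) - f y * (cn y u)%:R -
       b%:R * (f y * (e y u)%:R)) =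
      f y * ((b%:R * (d u y == 3%N)%:R + (cn y u)%:R + b%:R * (e y u)%:R) -
             (b%:R + (k - 1 - b)%:R * (e y u)%:R)) by ring.
    by rewrite NC subrr mulr0.
  rewrite !sumrB big_split /= -!mulr_sumr sf hg // hh ?Hu //.
  rewrite !(mulr0, subr0, addr0) => /eqP; rewrite mulf_eq0 (negbTE bne0) => /eqP.
  done.
have [H2|H2] := eqVneq (d x z) 2%N; last exact: f0.
have [u [Hu Huz]] := antipode esym eirr econ hb H2.
have := S3 u Hu; rewrite (bigD1 z) //= Huz eqxx mulr1 big1 ?addr0 //.
move=> y yz; have [H3|H3] := eqVneq (d u y) 3%N; last by rewrite mulr0.
by move: yz; rewrite (anti_uniq esym eirr econ hb hc hbk bpos H3 Huz) eqxx.
Qed.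

Lemma key3 (f : X -> algC) x :
  (forall y, d x y != 3%N -> f y = 0) ->
  (forall y, d x y = 2%N -> \sum_p f p * (e p y)%:R = 0) ->
  forall z, f z = 0.
Proof.
move=> f0 hg z.
have [H3|H3] := eqVneq (d x z) 3%N; last exact: f0.
have [b0|bpos] := posnP b.
  by have := b0_small esym econ dle3 hc x z b0; rewrite H3.
have [y [ezy Hy]] := dist_pred econ H3.
have ezy2 : e z y by rewrite esym.
have := hg y Hy; rewrite (bigD1 z) //= ezy2 mulr1 big1 ?addr0 //.
move=> p pz; have [Hp|Hp] := eqVneq (d x p) 3%N; last by rewrite f0 // mul0r.
by move: pz; rewrite (anti_uniq esym eirr econ hb hc hbk bpos Hp H3) eqxx.
Qed.
End Key.
Import GRing.Theory.
Local Open Scope ring_scope.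

Section Glue.
Variables (X : finType) (e : rel X).
Hypothesis esym : symmetric e.
Local Notation n := #|X|.
Local Notation d := (dist e).

Definition F (v : 'rV[algC]_n) (y : X) := v 0 (enum_rank y).

Lemma sum_enum (G : X -> algC) : \sum_(i < n) G (enum_val i) = \sum_y G y.
Proof.
rewrite [RHS](reindex (fun i : 'I_n => enum_val i)) //=; apply: onW_bij; exact: enum_val_bij.
Qed.

Lemma F_ext (v w : 'rV[algC]_n) : (forall y, F v y = F w y) -> v = w.
Proof.
move=> H; apply/rowP => j; rewrite -(enum_valK j); exact: H.
Qed.

Lemma FA v u : F (v *m adjmx e) u = \sum_y F v y * (e y u)%:R.
Proof.
rewrite /F mxE -sum_enum; apply: eq_bigr => i _.
by rewrite mxE enum_valK enum_rankK.
Qed.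

Lemma FE v x m u : F (v *m Estar e x m) u = F v u * (d x u == m)%:R.
Proof.
rewrite /F mxE (bigD1 (enum_rank u)) //= big1 ?addr0.
  by rewrite mxE eqxx enum_rankK.
by move=> i ne; rewrite mxE (negbTE ne) mulr0.
Qed.

Lemma FAA v u : F (v *m adjmx e *m adjmx e) u = \sum_y F v y * #|[set z | e y z & e z u]|%:R.
Proof.
rewrite FA.
under eq_bigr do rewrite FA mulr_suml.
rewrite exchange_big /=; apply: eq_bigr => y _.
under eq_bigr do rewrite -mulrA.
rewrite -mulr_sumr; congr (_ * _).
rewrite -sum1_card natr_sum [RHS]big_mkcond /=; apply: eq_bigr => z _.
by rewrite inE; case: (e y z); case: (e z u); rewrite ?mul1r ?mul0r.
Qed.

Lemma adj_tr : (adjmx e)^T = adjmx e.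
Proof. by apply/matrixP => i j; rewrite !mxE esym. Qed.

Lemma Estar_tr x m : (Estar e x m)^T = Estar e x m.
Proof.
apply/matrixP => i j; rewrite !mxE.
by case: eqVneq => [->|ne]; rewrite ?eqxx // eq_sym (negbTE ne).
Qed.

End Glue.
Import GRing.Theory.
Local Open Scope ring_scope.

Lemma inT_A (X : finType) (e : rel X) x : in_Terwilliger e x (adjmx e).
Proof. by move=> S _ HA _. Qed.

Lemma inT_E (X : finType) (e : rel X) x i : (i <= 3)%N -> in_Terwilliger e x (Estar e x i).
Proof. by move=> Hi S _ _ HE; apply: HE. Qed.

Theorem lemma7p2 (X : finType) (e : rel X) (k b : nat) (x : X) (W : 'M[algC]_#|X|) :
  taylor_graph e k b -> irr_Tmodule e x W ->
  is_endpoint e x W 0 \/ is_endpoint e x W 1.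
Proof.
case=> esym eirr econ dle3 [hb hc hbk] [HT Wn0 _].
have cl : forall (v : 'rV[algC]_#|X|) B, (v <= W)%MS -> in_Terwilliger e x B -> (v *m B^T <= W)%MS.
  by move=> v B Hv HB; exact: (submx_trans (submxMr B^T Hv) (HT B HB)).
have clA : forall v : 'rV[algC]_#|X|, (v <= W)%MS -> (v *m adjmx e <= W)%MS.
  by move=> v Hv; have := cl v _ Hv (@inT_A X e x); rewrite adj_tr.
have clE : forall (v : 'rV[algC]_#|X|) i, (i <= 3)%N -> (v <= W)%MS -> (v *m Estar e x i <= W)%MS.
  by move=> v i Hi Hv; have := cl v _ Hv (@inT_E X e x i Hi); rewrite Estar_tr.
have [E0|E0] := eqVneq (W *m (Estar e x 0)^T) 0; last by left; split.
have [E1|E1] := eqVneq (W *m (Estar e x 1)^T) 0; last first.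
  by right; split => // -[|j] // _; rewrite E0.
exfalso; move/negP: Wn0; apply.
have vanish : forall v : 'rV[algC]_#|X|, (v <= W)%MS -> forall u, (dist e x u <= 1)%N -> F v u = 0.
  move=> v /submxP[D ->] u Hu.
  have Hm : forall m, (m <= 1)%N -> dist e x u = m -> F (D *m W) u = 0.
    move=> m Hm Hdu.
    have : F (D *m W *m Estar e x m) u = 0.
      rewrite -mulmxA -(Estar_tr e x m).
      by case: m Hm {Hdu} => [|[|]] // _; rewrite ?E0 ?E1 mulmx0 /F mxE.
    by rewrite FE Hdu eqxx mulr1.
  by move: Hu; case Hd: (dist e x u) => [|[|]] // _; [apply: (Hm 0%N) | apply: (Hm 1%N)].
have zero2 : forall f : 'rV[algC]_#|X|, (f <= W)%MS -> forall y, F (f *m Estar e x 2) y = 0.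
  move=> f Hf; have Hf2 := clE f 2%N isT Hf.
  apply: (@key X e k b esym eirr econ dle3 hb hc hbk _ x).
  - by move=> y Hy; rewrite FE (negbTE Hy) mulr0.
  - by move=> u Hu; rewrite -FA; apply: (vanish _ (clA _ Hf2)); rewrite Hu.
  - move=> u Hu; rewrite -FAA.
    exact: (vanish _ (clA _ (clA _ Hf2)) u Hu).
have zero3 : forall f : 'rV[algC]_#|X|, (f <= W)%MS -> forall y, F (f *m Estar e x 3) y = 0.
  move=> f Hf; have Hf3 := clE f 3%N isT Hf.
  apply: (@key3 X e k b esym eirr econ dle3 hb hc hbk _ x).
  - by move=> y Hy; rewrite FE (negbTE Hy) mulr0.
  - move=> y Hy; rewrite -FA.
    have := zero2 _ (clA _ Hf3) y; rewrite FE Hy eqxx mulr1 //.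
have allz : forall v : 'rV[algC]_#|X|, (v <= W)%MS -> v = 0.
  move=> v Hv; apply: F_ext => y; rewrite /F mxE.
  have := dle3 x y; case Hd: (dist e x y) => [|[|[|[|]]]] // _.
  - by have := vanish v Hv y; rewrite Hd /F => ->.
  - by have := vanish v Hv y; rewrite Hd /F => ->.
  - by have := zero2 v Hv y; rewrite FE Hd mulr1 /F.
  - by have := zero3 v Hv y; rewrite FE Hd mulr1 /F.
apply/eqP/matrixP => i j; have := allz _ (row_sub i W).
by move/rowP/(_ j); rewrite !mxE.
Qed.
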